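(* For all $a,d,x\in\mathbb C$ and $n\in\mathbb C$ with $d-n\in\mathbb N$, $$f(a,d,n)_x=f(a-1,d,n)_x+f(a-1,d,n+1)_{x-1}$$ and $$f(a,d,n)_x=f(a-1,d,n)_{x+1}+f(a-1,d,n+1)_{x+1}.$$
   Context: For $z\in\mathbb C$ and $k\in\mathbb N$, $\binom{z}{k}=\frac{z(z-1)\cdots(z-k+1)}{k!}$. For $a,d,x,n\in\mathbb C$ with $d-n\in\mathbb N\cup\{-1\}$, $f(a,d,n)_x=\sum_{k=0}^{d-n}\binom{a+d+x-k}{k}\binom{d+k-x}{d-n-k}$, the empty sum (when $d-n=-1$) being $0$. *)

(* Defs.v *)
From HB Require Import structures.
From mathcomp Require Import all_boot all_order all_algebra.
From mathcomp Require Import boolp reals.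
From mathcomp Require Import complex.
Set Implicit Arguments. Unset Strict Implicit. Unset Printing Implicit Defensive.
Import Order.TTheory GRing.Theory Num.Theory.
Local Open Scope ring_scope.
Local Open Scope complex_scope.

Section Defs.
Variable R : realType.
Notation C := R[i].

Definition binom (z : C) (k : nat) : C :=
  (\prod_(i < k) (z - i%:R)) / (k`!)%:R.

(* flen d n = d - n + 1 when d - n \in N \cup {-1}, i.e. the number of
   summands of f(a,d,n); it is 0 (the value is irrelevant) otherwise. *)
Definition flen (d n : C) : nat :=
  match pselect (exists m : nat, d - n + 1 = m%:R) with
  | left P => projT1 (cid P)
  | right _ => 0%N
  end.

(* f(a,d,n)_x = sum_{k=0}^{d-n} binom(a+d+x-k, k) binom(d+k-x, d-n-k);
   for k < flen d n the nat (flen d n).-1 - k equals d-n-k. *)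
Definition f (a d n x : C) : C :=
  \sum_(k < flen d n)
     binom (a + d + x - k%:R) k * binom (d + k%:R - x) ((flen d n).-1 - k).
End Defs.

(* Main.v *)
Require Import Defs.
From HB Require Import structures.
From mathcomp Require Import all_boot all_order all_algebra.
From mathcomp Require Import boolp reals.
From mathcomp Require Import complex.
From mathcomp Require Import ring zify.
Import Order.TTheory GRing.Theory Num.Theory.
Local Open Scope ring_scope.
Local Open Scope complex_scope.

Section L.
Variable R : realType.
Notation C := R[i].

Lemma binom0 (z : C) : binom z 0 = 1.
Proof. by rewrite /binom big_ord0 fact0 divr1. Qed.

Lemma pascal (z : C) k : binom z k.+1 = binom (z - 1) k.+1 + binom (z - 1) k.
Proof.
rewrite /binom big_ord_recl big_ord_recr /=.
have -> : \prod_(i < k) (z - (bump 0 i)%:R) = \prod_(i < k) (z - 1 - i%:R).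
  by apply: eq_bigr => i _; rewrite /bump /= add1n -natr1; ring.
rewrite factS natrM.
have hk : (k`!)%:R != 0 :> C by rewrite pnatr_eq0 -lt0n fact_gt0.
have hk1 : (k.+1)%:R != 0 :> C by rewrite pnatr_eq0.
set P := \prod_(i < k) _.
rewrite -natr1 in hk1 *.
field; by rewrite ?hk ?hk1.
Qed.

Lemma flenE (d n : C) m : d - n = m%:R -> flen d n = m.+1.
Proof.
move=> h; rewrite /flen; case: pselect => [P|nP]; last first.
  by exfalso; apply: nP; exists m.+1; rewrite h -natr1.
case: (cid P) => m' /= hm'.
apply/eqP; rewrite -(eqr_nat C) -hm' h -natr1 //.
Qed.
End L.

Theorem lemma4p3 (R : realType) (a d x n : R[i]) :
  (exists m : nat, d - n = m%:R) ->
  f a d n x = f (a - 1) d n x + f (a - 1) d (n + 1) (x - 1) /\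
  f a d n x = f (a - 1) d n (x + 1) + f (a - 1) d (n + 1) (x + 1).
Proof.
case=> m hm.
have h1 : flen d n = m.+1 by apply: flenE.
have h2 : flen d (n + 1) = m.
  case: m hm h1 => [|m] hm _.
    rewrite /flen; case: pselect => // P; case: (cid P) => m' /= hm'.
    apply/eqP; rewrite -(eqr_nat R[i]) -hm'; by rewrite opprD addrA hm subrK.
  apply: flenE; rewrite opprD addrA hm -natr1; ring.
rewrite /f h1 h2 /=; split.
- rewrite big_ord_recl [X in _ = X + _]big_ord_recl /= !binom0 !mul1r -[RHS]addrA.
  congr (_ + _). rewrite -big_split /=; apply: eq_bigr => i _.
  rewrite /bump /= add1n pascal mulrDl; congr (_ * _ + _ * _).
  + congr (binom _ _); rewrite -?natr1; ring.
  + congr (binom _ _); rewrite -?natr1; ring.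
  + congr (binom _ _); rewrite -?natr1; [ring|lia].
- rewrite big_ord_recr [X in _ = X + _]big_ord_recr /= subnn !binom0 !mulr1.
  rewrite [RHS]addrAC; congr (_ + _); last by congr (binom _ _); ring.
  rewrite -big_split /=; apply: eq_bigr => i _.
  have hi : (m - i = (m.-1 - i).+1)%N by case: i => i /= Hi; lia.
  rewrite hi pascal mulrDr; congr (_ * _ + _ * _).
  + congr (binom _ _); ring.
  + congr (binom _ _); ring.
  + congr (binom _ _); ring.
  + congr (binom _ _); ring.
Qed.
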